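(* Let $\mathcal{A}$ be any (deterministic) online bin packing algorithm, let $F$ be a discrete probability distribution on $(0,1]$, and for a positive integer $n$ let $I_n(F)=(X_1,\ldots,X_n)$ be a list of $n$ i.i.d. samples from $F$. Then there exists a list $I$ of $n$ items such that $$\frac{\mathbb{E}[\mathcal{A}(I^\sigma)]}{\mathrm{OPT}(I)} \ge \frac{\mathbb{E}[\mathcal{A}(I_n(F))]}{\mathbb{E}[\mathrm{OPT}(I_n(F))]},$$ where $\sigma$ is uniform on $\mathcal{S}_n$. Moreover, if there is a constant $c>0$ such that $X_i\ge c$ almost surely for all $i\in[n]$, then $\mathrm{OPT}(I)\ge cn$.
   Context: Bin packing: items with sizes in $(0,1]$ are packed into unit-capacity bins (total size per bin at most $1$); $\mathrm{OPT}(I)$ is the minimum number of bins for list $I$, and $\mathcal{A}(I)$ the number of bins used by algorithm $\mathcal{A}$ when the items of $I$ arrive online in the given order. For $\sigma\in\mathcal{S}_n$ (permutations of $[n]$), $I^\sigma=(x_{\sigma(1)},\ldots,x_{\sigma(n)})$. *)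

(* Defs.v *)
From HB Require Import structures.
From mathcomp Require Import all_boot all_order all_algebra all_fingroup.
From mathcomp Require Import all_classical all_reals.
From mathcomp Require Import ereal esum.
Set Implicit Arguments. Unset Strict Implicit. Unset Printing Implicit Defensive.
Import Order.TTheory GRing.Theory Num.Theory.
Local Open Scope ring_scope.
Local Open Scope classical_set_scope.

Section BinPacking.
Variable R : realType.

Definition items_ok (s : seq R) : bool := all (fun x => (0 < x) && (x <= 1)) s.

Definition feasible (s : seq R) (k : nat) : bool :=
  [exists a : {ffun 'I_(size s) -> 'I_k},
     [forall j : 'I_k, \sum_(i < size s | a i == j) s`_i <= 1]].

(* OPT(s): the minimum number of bins (for valid lists, k = size s is
   always feasible, so the default value is never used). *)
Definition OPT (s : seq R) : nat :=
  \big[minn/(size s)]_(k < (size s).+1 | feasible s k) k.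

(* A deterministic online algorithm: given the items seen so far (in
   order) and the newly arriving item, it returns the (label of the) bin
   into which the new item is irrevocably placed.  Since the algorithm is
   deterministic, its whole state is a function of the past items. *)
Definition online_alg := seq R -> R -> nat.

Definition alg_assign (A : online_alg) (s : seq R) : seq nat :=
  mkseq (fun i => A (take i s) (nth 0 s i)) (size s).

Definition alg_bins (A : online_alg) (s : seq R) : nat :=
  size (undup (alg_assign A s)).

Definition valid_alg (A : online_alg) : Prop :=
  forall s : seq R, items_ok s -> forall b : nat,
    \sum_(i < size s | nth 0%N (alg_assign A s) i == b) s`_i <= 1.

Definition discrete_distr_01 (f : R -> R) : Prop :=
  [/\ forall x, 0 <= f x,
      forall x, 0 < f x -> 0 < x <= 1
    & (\esum_(x in [set: R]) (f x)%:E = 1)%E].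

Definition iid_expect (f : R -> R) (n : nat) (g : seq R -> nat) : \bar R :=
  \esum_(x in [set: n.-tuple R])
     ((\prod_(i < n) f (tnth x i)) * (g (tval x))%:R)%:E.

Definition permute_list n (I : n.-tuple R) (sigma : 'S_n) : seq R :=
  [seq tnth I (sigma i) | i <- enum 'I_n].

Definition perm_expect (A : online_alg) n (I : n.-tuple R) : R :=
  (n`!)%:R^-1 * \sum_(sigma : 'S_n) (alg_bins A (permute_list I sigma))%:R.

End BinPacking.

(* Main.v *)
Require Import Defs.
From HB Require Import structures.
From mathcomp Require Import all_boot all_order all_algebra all_fingroup.
From mathcomp Require Import all_classical all_reals.
From mathcomp Require Import ereal esum.
From mathcomp Require Import ring lra.
Import Order.TTheory GRing.Theory Num.Theory.
Local Open Scope ring_scope.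
Set Implicit Arguments. Unset Strict Implicit. Unset Printing Implicit Defensive.
Lemma OPT_ge1 (R : realType) (s : seq R) : (0 < size s)%N -> (1 <= OPT s)%N.
Proof.
move=> s0; rewrite /OPT; apply: (big_ind (fun k => 1 <= k)%N) => //.
- by move=> x y hx hy; rewrite leq_min hx hy.
- move=> [[|k] Hk] //= /existsP[a _].
  by case: (a (Ordinal s0)).
Qed.

Lemma OPT_le (R : realType) (s : seq R) : (OPT s <= size s)%N.
Proof.
rewrite /OPT; apply: (big_ind (fun k => k <= size s)%N) => //.
- by move=> x y hx hy; rewrite geq_min hx.
- by move=> [k Hk] _ /=.
Qed.

Lemma OPT_ge_c (R : realType) (s : seq R) (c : R) :
  (forall x, x \in s -> c <= x <= 1) -> c * (size s)%:R <= (OPT s)%:R.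
Proof.
move=> hs; rewrite /OPT.
apply: (big_ind (fun k : nat => c * (size s)%:R <= k%:R)).
- case: s hs => [|x s] hs; first by rewrite mulr0.
  have /andP[h1 h2] := hs x (mem_head _ _).
  rewrite -[X in _ <= X]mul1r ler_wpM2r //; exact: le_trans h1 h2.
- by move=> x y hx hy; rewrite /minn; case: ifP.
- move=> [k Hk] /= /existsP[a /forallP ha].
  have e := @partition_big R 0 +%R _ (index_enum (ordinal (size s))) _ predT (fun i => a i) predT (fun i => s`_i) (fun _ _ => erefl true).
  apply: (@le_trans _ _ (\sum_(i < size s) s`_i)).
    have -> : c * (size s)%:R = \sum_(i < size s) c by rewrite sumr_const card_ord mulr_natr.
    apply: ler_sum => i _.
    by have /andP[] := hs _ (mem_nth 0 (ltn_ord i)).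
  rewrite e /=; apply: (@le_trans _ _ (\sum_(j < k) 1)).
    by apply: ler_sum => j _; exact: ha.
  by rewrite sumr_const card_ord.
Qed.
Lemma esum_natmul (R : realType) (T : choiceType) (a : T -> \bar R) m :
  (forall x, (0 <= a x)%E) ->
  (\esum_(x in [set: T]) (a x *+ m) = (\esum_(x in [set: T]) a x) *+ m)%E.
Proof.
move=> a0.
have e x : (a x *+ m = \sum_(j < m) a x)%E by rewrite sumr_const card_ord.
under eq_esum => x _ do rewrite e.
rewrite esum_sum; first by rewrite sumr_const card_ord.
by move=> *; exact: a0.
Qed.

Definition ptup (R : Type) n (x : n.-tuple R) (s : 'S_n) : n.-tuple R :=
  [tuple tnth x (s i) | i < n].

Lemma ptupE (R : realType) n (x : n.-tuple R) s : tval (ptup x s) = permute_list x s.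
Proof. by []. Qed.

Lemma ptup_bij (R : Type) n (s : 'S_n) : bijective (fun x : n.-tuple R => ptup x s).
Proof.
exists (fun x => ptup x s^-1) => x; apply: eq_from_tnth => i;
  by rewrite !tnth_mktuple ?permKV ?permK.
Qed.

Lemma prod_ptup (R : realType) n (f : R -> R) (x : n.-tuple R) s :
  \prod_(i < n) f (tnth (ptup x s) i) = \prod_(i < n) f (tnth x i).
Proof.
symmetry; rewrite (reindex_inj (@perm_inj _ s)) /=.
by apply: eq_bigr => i _; rewrite tnth_mktuple.
Qed.
Lemma final_arith (R : realType) (a b : \bar R) (N O K : nat) :
  (0 < N)%N -> (0 < O)%N -> (0 <= a)%E -> (0 <= b)%E ->
  (a *+ (N * O) <= b *+ K)%E -> fine a / fine b <= N%:R^-1 * K%:R / O%:R.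
Proof.
move=> N0 O0 a0 b0 h.
have rhs0 : 0 <= N%:R^-1 * K%:R / O%:R :> R by rewrite !mulr_ge0 ?invr_ge0 ?ler0n.
case: b b0 h => [r||] //= b0 h; last by rewrite invr0 mulr0.
case: a a0 h => [s||] //= a0 h; last first.
  exfalso; move: h.
  rewrite (_ : (N * O = (N * O).-1.+1)%N); last by rewrite prednK // muln_gt0 N0 O0.
  by rewrite enatmul_pinfty -EFin_natmul leye_eq.
rewrite -!EFin_natmul lee_fin in h; rewrite lee_fin in a0 b0.
have [->|r0] := eqVneq r 0; first by rewrite invr0 mulr0.
have rp : 0 < r by rewrite lt_def r0.
rewrite ler_pdivrMr //.
have -> : N%:R^-1 * K%:R / O%:R * r = (r *+ K) / (N * O)%:R.
  rewrite natrM -mulr_natl; field.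
  by rewrite !pnatr_eq0 -!lt0n N0 O0.
rewrite ler_pdivlMr ?ltr0n ?muln_gt0 ?N0 // mulr_natr.
exact: h.
Qed.

Lemma enatmulA (R : realType) (x : \bar R) m k : (x *+ (m * k) = x *+ m *+ k)%E.
Proof. exact: mulrnA. Qed.
Theorem lemma14 (R : realType) (A : online_alg R) (f : R -> R) (n : nat) :
  valid_alg A -> discrete_distr_01 f -> (0 < n)%N ->
  exists I : n.-tuple R,
    [/\ items_ok (tval I),
        fine (iid_expect f n (alg_bins A)) / fine (iid_expect f n (@OPT R))
          <= perm_expect A I / (OPT (tval I))%:R
      & forall c : R, 0 < c -> (forall x, 0 < f x -> c <= x) ->
          c * n%:R <= (OPT (tval I))%:R].
Proof.
move=> vA [f0 fsupp fsum] n0.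
pose P (x : n.-tuple R) := \prod_(i < n) f (tnth x i).
pose supp (x : n.-tuple R) := [forall i, 0 < f (tnth x i)].
pose Kn (x : n.-tuple R) := (\sum_(s : 'S_n) alg_bins A (permute_list x s))%N.
have P0 x : 0 <= P x by apply: prodr_ge0 => i _.
have Pn x : ~~ supp x -> P x = 0.
  move=> /forallPn[i /negP hi]; rewrite /P (bigD1 i) //=.
  have -> : f (tnth x i) = 0.
    by apply/eqP; rewrite eq_le f0 andbT leNgt; apply/negP.
  by rewrite mul0r.
have size_pl (x : n.-tuple R) (s : 'S_n) : size (permute_list x s) = n by rewrite size_map size_enum_ord.
have Kb x : (Kn x <= n`! * n)%N.
  apply: (@leq_trans (\sum_(s : 'S_n) n)); last by rewrite sum_nat_const card_Sn.
  apply: leq_sum => s _; rewrite /alg_bins; apply: leq_trans (size_undup _) _.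
  by rewrite /alg_assign size_mkseq size_pl.
have Ob (x : n.-tuple R) : (OPT (tval x) <= n)%N by have := OPT_le (tval x); rewrite size_tuple.
have O1 (x : n.-tuple R) : (1 <= OPT (tval x))%N by apply: OPT_ge1; rewrite size_tuple.
have [x0 fx0] : exists x0, 0 < f x0.
  apply: contrapT => hno; move: fsum; rewrite esum1 => [|x _].
    by move=> /eqP; rewrite eqe eq_sym oner_eq0.
  congr EFin; apply/eqP; rewrite eq_le f0 andbT leNgt; apply/negP => h.
  by apply: hno; exists x.
pose t0 : n.-tuple R := [tuple x0 | _ < n].
have st0 : supp t0 by apply/forallP => i; rewrite tnth_mktuple.
pose T := ('I_(n`! * n).+1 * 'I_n.+1)%type.
pose code (x : n.-tuple R) : T := (inord (Kn x), inord (OPT (tval x))).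
pose Pb := fun p : T => `[< exists x, supp x /\ code x = p >].
pose F := fun p : T => (p.1 : nat)%:R / (p.2 : nat)%:R : R.
have Pb0 : Pb (code t0) by apply/asboolP; exists t0.
have := @real_arg_maxP R T (code t0) Pb F Pb0 (fun i _ => num_real (F i)). case => pm Pbm Fmax.
move/asboolP: Pbm => [I [sI cI]].
have key x : supp x -> (Kn x)%:R * (OPT I)%:R <= (Kn I)%:R * (OPT (tval x))%:R :> R.
  move=> sx; have := Fmax (code x) (asboolT (ex_intro _ x (conj sx erefl))).
  rewrite -cI /F /= !inordK ?ltnS //.
  rewrite ler_pdivrMr ?ltr0n // mulrAC ler_pdivlMr ?ltr0n //.
exists I; split.
- apply/allP => y /tnthP[i ->]; apply: fsupp; exact: (forallP sI i).
- set a := iid_expect f n (alg_bins A); set b := iid_expect f n (@OPT R).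
  have a0 : (0 <= a)%E by apply: esum_ge0 => x _; rewrite lee_fin mulr_ge0 ?prodr_ge0.
  have b0 : (0 <= b)%E by apply: esum_ge0 => x _; rewrite lee_fin mulr_ge0 ?prodr_ge0.
  have step1 : (a *+ n`! = \esum_(x in [set: n.-tuple R]) (P x * (Kn x)%:R)%:E)%E.
    have <- : (\sum_(s : 'S_n) a = a *+ n`!)%E by rewrite sumr_const card_Sn.
    transitivity (\sum_(s : 'S_n) \esum_(x in [set: n.-tuple R])
                     (P x * (alg_bins A (permute_list x s))%:R)%:E)%E.
      apply: eq_bigr => s _.
      rewrite /a /iid_expect (@reindex_esum R _ _ setT setT (fun x => ptup x s)); last first.
        by rewrite setTT_bijective; exact: ptup_bij.
      by apply: eq_esum => x _; rewrite prod_ptup ptupE.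
    rewrite -esum_sum; last by move=> x s _ _; rewrite lee_fin mulr_ge0.
    apply: eq_esum => x _; rewrite sumEFin; congr EFin.
    by rewrite /Kn natr_sum mulr_sumr.
  have step2 : (a *+ (n`! * OPT I)%N <= b *+ Kn I)%E.
    rewrite enatmulA.
    rewrite step1 -(@esum_natmul R _ (fun x => (P x * (Kn x)%:R)%:E)); last first.
      by move=> x; rewrite lee_fin mulr_ge0.
    rewrite /b /iid_expect -(@esum_natmul R _ (fun x : n.-tuple R => (P x * (OPT x)%:R)%:E)); last first.
      by move=> x; rewrite lee_fin mulr_ge0.
    apply: le_esum => x _; rewrite -!EFin_natmul lee_fin -!mulrnAr.
    case sx: (supp x); last by rewrite (Pn x (negbT sx)) !mul0r.
    apply: (ler_wpM2l (P0 x)).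
    by rewrite -[_ *+ OPT I]mulr_natr -[_ *+ Kn I]mulr_natr [X in _ <= X]mulrC; exact: key.
  have pe : perm_expect A I = (n`!)%:R^-1 * (Kn I)%:R by rewrite /perm_expect /Kn natr_sum.
  rewrite pe; apply: final_arith => //; first exact: fact_gt0.
- move=> c c0 hc; have := @OPT_ge_c R (tval I) c; rewrite size_tuple; apply.
  move=> y /tnthP[i ->]; have h := forallP sI i.
  by rewrite (hc _ h) /=; case/andP: (fsupp _ h).
Qed.
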